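(* (i) For every $K\ge 2$ and evenly spaced $z_1<\dots<z_K$, the set of CDRL statistics $\{s_{z_k,z_{k+1}}:k=1,\dots,K-1\}$, where $s_{z_k,z_{k+1}}(\mu)=\mathbb{E}_{Z\sim\mu}[h_{z_k,z_{k+1}}(Z)]$, is not Bellman closed. (ii) For every $K\ge1$, the set of QDRL statistics $\{\mu\mapsto F_\mu^{-1}(\tau_k): k=1,\dots,K\}$ with $\tau_k=\frac{2k-1}{2K}$ is not Bellman closed.
   Context: For $a<b$, $h_{a,b}:\mathbb{R}\to\mathbb{R}$ is the piecewise linear function with $h_{a,b}(x)=1$ for $x\le a$, $h_{a,b}(x)=0$ for $x\ge b$, and $h_{a,b}(x)=(b-x)/(b-a)$ for $x\in[a,b]$. For a distribution $\mu$ with CDF $F_\mu$, $F_\mu^{-1}(\tau)=\inf\{z\in\mathbb{R}:F_\mu(z)\ge\tau\}$. MDP setting: finite state space $\mathcal X$, finite action space $\mathcal A$, transition kernel $p$, discount $\gamma\in[0,1)$, reward distributions $\mathcal R(\cdot\mid x,a)$; policy $\pi:\mathcal X\to\mathscr P(\mathcal A)$; given $X_0=x,A_0=a$, $R_t\sim\mathcal R(\cdot\mid X_t,A_t)$, $X_{t+1}\sim p(\cdot\mid X_t,A_t)$, $A_{t+1}\sim\pi(\cdot\mid X_{t+1})$; $\eta^\pi(x,a)$ is the law of $\sum_t\gamma^tR_t$. Bellman closedness: a finite set of statistics $\{s_1,\dots,s_K\}$ is Bellman closed if for each $\gamma\in[0,1)$ there is a single map $G_\gamma$ such that for every MDP with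 discount $\gamma$, every policy $\pi$ and every $(x,a)$, $s_{1:K}(\eta^\pi(x,a))=G_\gamma\big(\mathrm{Law}(R_0,s_{1:K}(\eta^\pi(X_1,A_1))\mid X_0=x,A_0=a)\big)$. *)

(* Defs.v *)
From HB Require Import structures.
From mathcomp Require Import all_boot all_order all_algebra.
From mathcomp Require Import all_classical all_reals all_analysis.
Set Implicit Arguments. Unset Strict Implicit. Unset Printing Implicit Defensive.
Import Order.TTheory GRing.Theory Num.Theory numFieldNormedType.Exports.
Local Open Scope ring_scope.
Local Open Scope classical_set_scope.

Section Defs.
Variable R : realType.

Definition hfun (a b x : R) : R :=
  if x <= a then 1 else if b <= x then 0 else (b - x) / (b - a).

Definition cdrl_stat (a b : R) (mu : probability R R) : R :=
  fine (\int[mu]_z (hfun a b z)%:E)%E.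

Definition cdf (mu : probability R R) (z : R) : R := fine (mu `]-oo, z]).
Definition quantile_stat (tau : R) (mu : probability R R) : R :=
  inf [set z : R | tau <= cdf mu z].

Definition is_kernel (X A : finType) (p : X -> A -> X -> R) : Prop :=
  (forall x a y, 0 <= p x a y) /\ (forall x a, \sum_(y : X) p x a y = 1).

Definition is_policy (X A : finType) (pi : X -> A -> R) : Prop :=
  (forall x a, 0 <= pi x a) /\ (forall x, \sum_(a : A) pi x a = 1).

(* (X_t, A_t, R_t)_t on (Omega, P) is the MDP trajectory started at
   X_0 = x0, A_0 = a0: its finite-dimensional distributions are the ones
   given by R_t ~ Rw(.|X_t,A_t), X_{t+1} ~ p(.|X_t,A_t),
   A_{t+1} ~ pi(.|X_{t+1}) (conditionally independently). *)
Definition is_trajectory (X A : finType) (p : X -> A -> X -> R)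
  (rw : X -> A -> probability R R) (pi : X -> A -> R) (x0 : X) (a0 : A)
  (d : measure_display) (Omega : measurableType d) (P : probability Omega R)
  (Xs : nat -> Omega -> X) (As : nat -> Omega -> A) (Rs : nat -> Omega -> R)
  : Prop :=
  [/\ (forall t x, measurable (Xs t @^-1` [set x])),
      (forall t a, measurable (As t @^-1` [set a])),
      (forall t, measurable_fun setT (Rs t)) &
      forall (n : nat) (xs : nat -> X) (as_ : nat -> A) (Bs : nat -> set R),
        (forall t, measurable (Bs t)) ->
        fine (P [set w | forall t, (t <= n)%N ->
                   [/\ Xs t w = xs t, As t w = as_ t & Bs t (Rs t w)]]) =
        (if (xs 0%N == x0) && (as_ 0%N == a0) then 1 else 0) *
        (\prod_(t < n.+1) fine (rw (xs t) (as_ t) (Bs t))) *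
        (\prod_(t < n) (p (xs t) (as_ t) (xs t.+1) * pi (xs t.+1) (as_ t.+1)))].

Definition disc_partial (Omega : Type) (gamma : R) (Rs : nat -> Omega -> R)
  (w : Omega) : nat -> R := series (fun t => gamma ^+ t * Rs t w).

Definition is_return_dist (X A : finType) (gamma : R) (p : X -> A -> X -> R)
  (rw : X -> A -> probability R R) (pi : X -> A -> R)
  (eta : X -> A -> probability R R) : Prop :=
  forall x a, exists (d : measure_display) (Omega : measurableType d)
    (P : probability Omega R) (Xs : nat -> Omega -> X) (As : nat -> Omega -> A)
    (Rs : nat -> Omega -> R),
    [/\ is_trajectory p rw pi x a P Xs As Rs,
        (forall w, cvgn (disc_partial gamma Rs w)) &
        forall B : set R, measurable B ->
          eta x a B = P [set w | B (limn (disc_partial gamma Rs w))]].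

(* Law(R_0, s_{1:m}(eta(X_1,A_1))) as a set function on R x R^m.  Since the
   second component takes finitely many values, the law is determined by its
   values on sets all of whose sections are Borel; it is set to 0 elsewhere. *)
Definition joint_law (X A : finType) (m : nat)
  (s : 'I_m -> probability R R -> R) (eta : X -> A -> probability R R)
  (d : measure_display) (Omega : measurableType d) (P : probability Omega R)
  (Xs : nat -> Omega -> X) (As : nat -> Omega -> A) (Rs : nat -> Omega -> R)
  : set (R * ('I_m -> R)) -> \bar R :=
  fun E => if `[< forall v, measurable [set r | E (r, v)] >] then
     P [set w | E (Rs 0%N w, fun k => s k (eta (Xs 1%N w) (As 1%N w)))]
   else 0%E.

Definition bellman_closed (m : nat) (s : 'I_m -> probability R R -> R) : Prop :=
  forall gamma : R, 0 <= gamma < 1 ->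
  exists G : (set (R * ('I_m -> R)) -> \bar R) -> ('I_m -> R),
  forall (X A : finType) (p : X -> A -> X -> R)
    (rw : X -> A -> probability R R) (pi : X -> A -> R)
    (eta : X -> A -> probability R R),
    is_kernel p -> is_policy pi -> is_return_dist gamma p rw pi eta ->
    forall (x : X) (a : A) (d : measure_display) (Omega : measurableType d)
      (P : probability Omega R) (Xs : nat -> Omega -> X)
      (As : nat -> Omega -> A) (Rs : nat -> Omega -> R),
      is_trajectory p rw pi x a P Xs As Rs ->
      (fun k => s k (eta x a)) = G (joint_law s eta P Xs As Rs).

End Defs.

(* Main.v *)
Require Import Defs.
From HB Require Import structures.
From mathcomp Require Import all_boot all_order all_algebra.
From mathcomp Require Import all_classical all_reals all_analysis.
From mathcomp Require Import measurable_realfun.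
From mathcomp Require Import ring lra zify.
Import Order.TTheory GRing.Theory Num.Theory numFieldNormedType.Exports.
Set Implicit Arguments. Unset Strict Implicit. Unset Printing Implicit Defensive.
Local Open Scope ring_scope.
Local Open Scope classical_set_scope.

Section pmix.
Context d (T : measurableType d) (R : realType).
Variables (w : R) (m1 m2 : probability T R).
Definition pmix : set T -> \bar R := fun A =>
  if (0 <= w <= 1) then (w%:E * m1 A + (1 - w)%:E * m2 A)%E else m1 A.
Let pmix0 : pmix set0 = 0%E.
Proof. by rewrite /pmix !measure0 !mule0 adde0 if_same. Qed.
Let pmix_ge0 A : (0 <= pmix A)%E.
Proof.
rewrite /pmix; case: ifPn => // /andP[w0 w1].
by rewrite adde_ge0 // mule_ge0 // lee_fin subr_ge0.
Qed.
Let pmix_sigma : semi_sigma_additive pmix.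
Proof.
move=> F mF tF mUF; rewrite /pmix; case: ifPn => w01;
  last exact: measure_semi_sigma_additive.
move/andP: w01 => [w0 w1].
have w0' : 0 <= 1 - w by rewrite subr_ge0.
have E : forall A, (w%:E * m1 A + (1-w)%:E * m2 A)%E =
   measure_add (mscale (NngNum w0) m1) (mscale (NngNum w0') m2) A.
  by move=> A; rewrite measure_addE.
rewrite E; under eq_fun do under eq_bigr do rewrite E.
exact: measure_semi_sigma_additive.
Qed.
HB.instance Definition _ := isMeasure.Build _ _ _ pmix pmix0 pmix_ge0 pmix_sigma.
Let pmixT : pmix setT = 1%E.
Proof.
rewrite /pmix !probability_setT; case: ifPn => // _.
by rewrite !mule1 -EFinD subrKC.
Qed.
HB.instance Definition _ := Measure_isProbability.Build _ _ _ pmix pmixT.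
Lemma pmixE A : 0 <= w <= 1 -> pmix A = (w%:E * m1 A + (1 - w)%:E * m2 A)%E.
Proof. by rewrite /pmix => ->. Qed.
End pmix.


Section mdp.
Variable R : realType.
Variables (w p a1 a2 b : R).
Definition S := (bool * bool)%type.
Definition sx : S := (false,false).
Definition sy : S := (false,true).
Definition sz : S := (true,false).
Definition so : S := (true,true).
Definition pk (s : S) (_ : unit) (s' : S) : R :=
  if s == sx then (if s' == sy then w else if s' == sz then 1 - w else 0)
  else (if s' == so then 1 else 0).
Definition pol (s : S) (_ : unit) : R := 1.
Definition dmix (q u v : R) : probability R R := pmix q \d_u \d_v.
Definition rwd (s : S) (_ : unit) : probability R R :=
  if s == sy then dmix p a1 a2 else if s == sz then (\d_b : probability R R)
  else (\d_(0:R) : probability R R).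

Lemma tail_lem m (ys : nat -> S) (as_ : nat -> unit) (Cs : nat -> set R) :
  ys 0%N != sx ->
  (\prod_(t < m) fine (rwd (ys t.+1) (as_ t.+1) (Cs t.+1))) *
  (\prod_(t < m) (pk (ys t) (as_ t) (ys t.+1) * pol (ys t.+1) (as_ t.+1))) =
  (`[< forall t, (t < m)%N -> so = ys t.+1 /\ Cs t.+1 0 >])%:R.
Proof.
elim: m ys as_ Cs => [|m IH] ys as_ Cs ys0.
  rewrite !big_ord0 mulr1.
  by have -> : `[< forall t, (t < 0)%N -> so = ys t.+1 /\ Cs t.+1 0 >] = true
    by apply/asboolP.
rewrite !big_ord_recl /=.
rewrite mulrACA.
have := IH (fun t => ys t.+1) (fun t => as_ t.+1) (fun t => Cs t.+1).
rewrite /= => IH'.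
have [e1|ne1] := eqVneq (ys 1%N) so.
  rewrite IH'; last by rewrite e1.
  rewrite /pk /pol /rwd e1 (negbTE ys0) eqxx /= mulr1.
  rewrite indicE mulr1.
  case: (pselect (Cs 1%N 0)) => c.
    rewrite mem_set // mul1r; congr (_ %:R); rewrite (@asbool_equiv_eq _ (forall t : nat, (t < m.+1)%N -> so = ys t.+1 /\ Cs t.+1 0)) //; split.
    - by move=> H [|t] tm //; apply: H.
    - by move=> H t tm; apply: (H t.+1).
  rewrite memNset // mul0r; by rewrite asboolF // => /(_ 0%N erefl) [].
rewrite {1}/pk (negbTE ys0) (negbTE ne1) mul0r mulr0 mul0r.
by rewrite asboolF // => /(_ 0%N erefl) [] e _; move: ne1; rewrite -e eqxx.
Qed.

Definition Xtr (s0 : S) (f1 : R -> S) (t : nat) (om : R) : S :=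
  match t with 0 => s0 | 1 => f1 om | _ => so end.
Definition Atr (t : nat) (om : R) : unit := tt.
Definition Rtr (g0 g1 : R -> R) (t : nat) (om : R) : R :=
  match t with 0 => g0 om | 1 => g1 om | _ => 0 end.

Lemma mcst (Q : Prop) : measurable [set _ : R | Q].
Proof.
case: (pselect Q) => q.
  by rewrite (_ : [set _ | Q] = setT) //; apply/seteqP; split.
by rewrite (_ : [set _ | Q] = set0) //; apply/seteqP; split.
Qed.

Lemma setQE (Q : Prop) (A : set R) :
  [set om | Q /\ A om] = if `[<Q>] then A else set0.
Proof.
case: (pselect Q) => q.
  by rewrite asboolT //; apply/seteqP; split => om /= => [[]|].
by rewrite asboolF //; apply/seteqP; split => om /= => [[]|].
Qed.

Lemma pk_sx s u : pk s u sx = 0.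
Proof. by rewrite /pk; case: ifP. Qed.

Lemma traj_ok (s0 : S) (f1 : R -> S) (g0 g1 : R -> R) (P : probability R R) :
  (forall s, measurable (f1 @^-1` [set s])) ->
  measurable_fun setT g0 -> measurable_fun setT g1 ->
  (forall B0, measurable B0 -> P [set om | B0 (g0 om)] = rwd s0 tt B0) ->
  (forall B0 B1 s1, measurable B0 -> measurable B1 ->
     fine (P [set om | B0 (g0 om) /\ f1 om = s1 /\ B1 (g1 om)]) =
     fine (rwd s0 tt B0) * pk s0 tt s1 * fine (rwd s1 tt B1)) ->
  is_trajectory pk rwd pol s0 tt P (Xtr s0 f1) Atr (Rtr g0 g1).
Proof.
move=> mf1 mg0 mg1 H0 H; split.
- move=> [|[|t]] s /=.
  + exact: (mcst (s0 = s)).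
  + exact: mf1.
  + exact: (mcst (so = s)).
- move=> t a; exact: (mcst (tt = a)).
- by move=> [|[|t]] //=; exact: measurable_cst.
move=> n xs as_ Bs mB.
have a0 : as_ 0%N = tt by case: (as_ 0%N).
case: n => [|m].
  rewrite (_ : [set w | _] = [set om | s0 = xs 0%N /\ Bs 0%N (g0 om)]); last first.
    apply/seteqP; split => om /=.
    - by move=> /(_ 0%N (leqnn 0)) [e _ ?].
    - move=> [e B] [|t] // _; split => //; by case: (as_ 0%N).
  rewrite big_ord1 big_ord0 mulr1 a0 eqxx andbT setQE.
  have [e|ne] := eqVneq (xs 0%N) s0.
    by rewrite e asboolT // mul1r H0.
  by rewrite asboolF ?measure0 ?mul0r // => e; move: ne; rewrite e eqxx.
pose T := forall t, (t < m)%N -> so = xs t.+2 /\ Bs t.+2 0.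
rewrite (_ : [set w | _] = [set om | (s0 = xs 0%N /\ T) /\
   (Bs 0%N (g0 om) /\ f1 om = xs 1%N /\ Bs 1%N (g1 om))]); last first.
  apply/seteqP; split => om /=.
  - move=> Hom; have [e0 _ b0] := Hom 0%N erefl; have [e1 _ b1] := Hom 1%N erefl.
    split; last by [].
    split => // t tm; by have [] := Hom t.+2 tm.
  - move=> [[e0 HT] [b0 [e1 b1]]] [|[|t]] tl /=; split => //; try by case: (as_ _).
    by have [] := HT t tl.
    by have [] := HT t tl.
rewrite setQE a0 eqxx andbT.
rewrite big_ord_recl big_ord_recl big_ord_recl.
set PF := \prod_(i < m) fine _.
set PG := \prod_(i < m) (_ * _).
set F0 := fine (rwd (xs ord0) _ _).
set F1 := fine (rwd (xs (lift ord0 ord0)) _ _).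
set G0 := pk _ _ _ * _.
have -> : (if xs 0%N == s0 then 1 else 0) * (F0 * (F1 * PF)) * (G0 * PG) =
   ((if xs 0%N == s0 then 1 else 0) * F0 * F1 * G0) * (PF * PG) by ring.
have [e1|ne1] := eqVneq (xs 1%N) sx.
  have -> : G0 = 0 by rewrite /G0 /= e1 pk_sx mul0r.
  rewrite !(mul0r,mulr0).
  case: ifP => _; last by rewrite measure0.
  by rewrite H // e1 pk_sx mulr0 mul0r.
have -> : PF * PG = (`[< T >])%:R.
  have TL := @tail_lem m (fun t => xs t.+1) (fun t => as_ t.+1) (fun t => Bs t.+1) ne1.
  exact TL.
case: (eqP (x := xs 0%N) (y := s0)) => e0; last first.
  rewrite (asboolF (P := s0 = xs 0%N /\ T)); last by move=> [e _]; apply: e0.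
  by rewrite measure0 !mul0r.
case: (pselect T) => HT; last first.
  rewrite (asboolF (P := s0 = xs 0%N /\ T)); last by move=> [].
  by rewrite (asboolF HT) measure0 !mulr0.
rewrite asboolT // asboolT // H // /F0 /F1 /G0 /pol e0 /=.
rewrite mul1r !mulr1 [RHS]mulrAC; reflexivity.
Qed.

Definition ind (Q : Prop) : R := (`[< Q >])%:R.

Lemma diracF (a : R) (A : set R) : fine (\d_a A : \bar R) = ind (A a).
Proof. by rewrite diracE. Qed.

Lemma dmixF q u v A : 0 <= q <= 1 ->
  fine (dmix q u v A) = q * ind (A u) + (1 - q) * ind (A v).
Proof. by move=> q01; rewrite /dmix /= pmixE // !diracE -!EFinM -EFinD. Qed.

Lemma dmixE q u v A : 0 <= q <= 1 ->
  dmix q u v A = (q * ind (A u) + (1 - q) * ind (A v))%:E.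
Proof. by move=> q01; rewrite /dmix /= pmixE // !diracE -!EFinM -EFinD. Qed.

Lemma dpE (a : R) (A : set R) : (\d_a : probability R R) A = (ind (A a))%:E.
Proof. by rewrite /= diracE. Qed.

Lemma PconstE (P : probability R R) (Q : Prop) :
  P [set _ | Q] = (ind Q)%:E.
Proof.
rewrite /ind; case: (pselect Q) => q.
  rewrite asboolT // (_ : [set _ | Q] = setT) ?probability_setT //.
  by apply/seteqP; split.
rewrite asboolF // (_ : [set _ | Q] = set0) ?measure0 //.
by apply/seteqP; split.
Qed.

Lemma setQE' (Q : Prop) (A : set R) :
  [set om | A om /\ Q] = if `[<Q>] then A else set0.
Proof.
case: (pselect Q) => q.
  by rewrite asboolT //; apply/seteqP; split => om /= => [[]|].
by rewrite asboolF //; apply/seteqP; split => om /= => [[]|].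
Qed.

Lemma sumS (F : S -> R) : \sum_(s : S) F s = F sx + F sy + F sz + F so.
Proof.
rewrite (eq_bigr (fun p => F (p.1, p.2))); last by case.
rewrite -(pair_bigA _ (fun i j => F (i, j))) /= !big_bool /= !addrA.
rewrite /sx /sy /sz /so; ring.
Qed.

Lemma kernel_ok : 0 <= w <= 1 -> is_kernel pk.
Proof.
move=> /andP[w0 w1]; split.
  move=> s u s'; rewrite /pk; case: ifP => _; last by case: ifP.
  case: ifP => _ //; case: ifP => _ //; by rewrite subr_ge0.
move=> s u; rewrite sumS /pk.
by case: s => [[] []]; rewrite /sx /sy /sz /so /= ?add0r ?addr0 ?subrKC.
Qed.

Lemma policy_ok : is_policy pol.
Proof.
split => // s.
by rewrite /pol big_const card_unit /= addr0.
Qed.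

Lemma ind_and (P1 Q : Prop) : ind (P1 /\ Q) = ind P1 * ind Q.
Proof.
rewrite /ind; case: (pselect P1) => h1; case: (pselect Q) => h2.
- by rewrite (asboolT h1) (asboolT h2) (asboolT (conj h1 h2)) mulr1.
- by rewrite (asboolT h1) (asboolF h2) (@asboolF (P1 /\ Q)) ?mulr0 // => -[].
- by rewrite (asboolT h2) (asboolF h1) (@asboolF (P1 /\ Q)) ?mul0r // => -[].
- by rewrite (asboolF h1) (@asboolF (P1 /\ Q)) ?mul0r // => -[].
Qed.

Lemma ind_eqS (s s' : S) : ind (s = s') = (s == s')%:R.
Proof.
rewrite /ind; case: (eqVneq s s') => [->|ne]; first by rewrite asboolT.
by rewrite asboolF // => e; move: ne; rewrite e eqxx.
Qed.

Lemma traj_det (s0 : S) (g0 : R -> R) (P : probability R R) :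
  s0 != sx -> measurable_fun setT g0 ->
  (forall B0, measurable B0 -> P [set om | B0 (g0 om)] = rwd s0 tt B0) ->
  is_trajectory pk rwd pol s0 tt P (Xtr s0 (fun _ => so)) Atr (Rtr g0 (fun _ => 0)).
Proof.
move=> ns mg0 H0; apply: traj_ok => //.
  move=> s; exact: (mcst (so = s)).
move=> B0 B1 s1 mB0 mB1.
rewrite setQE'.
rewrite /pk (negbTE ns).
case: (eqVneq s1 so) => [->|ne].
  rewrite mulr1 (_ : rwd so tt B1 = \d_(0:R) B1) // diracF.
  rewrite /ind; case: (pselect (B1 0)) => h.
    by rewrite asboolT // asboolT // H0 // mulr1.
  by rewrite asboolF ?asboolF ?measure0 ?mulr0 // => -[].
rewrite mulr0 mul0r asboolF ?measure0 // => -[e _].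
by move: ne; rewrite -e eqxx.
Qed.

Definition f1x (om : R) : S := if om == 2 then sz else sy.
Definition g1x (om : R) : R := if om == 0 then a1 else if om == 1 then a2 else b.
Definition Px : probability R R := pmix w (dmix p 0 1) (\d_(2:R) : probability R R).

Lemma r02 : ((0:R) == 2) = false. Proof. by rewrite eq_sym pnatr_eq0. Qed.
Lemma r20 : ((2:R) == 0) = false. Proof. by rewrite pnatr_eq0. Qed.
Lemma r12 : ((1:R) == 2) = false. Proof. by rewrite eq_sym (eqr_nat R 2 1). Qed.
Lemma r21 : ((2:R) == 1) = false. Proof. by rewrite (eqr_nat R 2 1). Qed.
Lemma r10 : ((1:R) == 0) = false. Proof. by rewrite oner_eq0. Qed.
Lemma r01 : ((0:R) == 1) = false. Proof. by rewrite eq_sym oner_eq0. Qed.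

Lemma PxF A : 0 <= w <= 1 -> 0 <= p <= 1 ->
  fine (Px A) = w * (p * ind (A 0) + (1 - p) * ind (A 1)) + (1 - w) * ind (A 2).
Proof.
move=> w01 p01; rewrite /Px /= pmixE // /dmix /= pmixE // !diracE.
Qed.

Lemma traj_x : 0 <= w <= 1 -> 0 <= p <= 1 ->
  is_trajectory pk rwd pol sx tt Px (Xtr sx f1x) Atr (Rtr (fun _ => 0) g1x).
Proof.
move=> w01 p01; apply: traj_ok.
- move=> s.
  rewrite (_ : _ @^-1` _ = ([set 2] `&` [set _ | sz = s]) `|`
      (~` [set (2:R)] `&` [set _ | sy = s])).
    apply: measurableU; apply: measurableI.
    + exact: measurable_set1.
    + exact: mcst.
    + apply: measurableC; exact: measurable_set1.
    + exact: mcst.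
  apply/seteqP; split => om /=; rewrite /f1x.
    move=> h; have [e2|n2] := eqVneq om 2.
      by left; split => //; move: h; rewrite e2 eqxx.
    right; split; first by apply/eqP.
    by move: h; rewrite (negbTE n2).
  move=> [[/= -> h]|[/= n2 h]]; first by rewrite eqxx.
  by rewrite ifN //; apply/eqP.
- exact: measurable_cst.
- rewrite /g1x; apply: measurable_fun_ifT.
  + apply: measurable_realfun.measurable_fun_eqr => //; exact: measurable_cst.
  + exact: measurable_cst.
  apply: measurable_fun_ifT.
  + apply: measurable_realfun.measurable_fun_eqr => //; exact: measurable_cst.
  + exact: measurable_cst.
  + exact: measurable_cst.
- move=> B0 mB0; rewrite PconstE (_ : rwd sx tt B0 = \d_(0:R) B0) // diracE.
move=> B0 B1 s1 mB0 mB1; rewrite PxF //.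
rewrite /f1x /g1x /= r02 r12 r10 r20 r21 eqxx.
rewrite !eqxx !ind_and !ind_eqS indicE (_ : (0 \in B0)%:R = ind (B0 0)) //.
case: s1 => [[] []]; rewrite /sx /sy /sz /so /pk /=.
- ring.
- rewrite indicE (_ : (b \in B1)%:R = ind (B1 b)) //; ring.
- rewrite (_ : fine (pmix p \d_a1 \d_a2 B1) = fine (dmix p a1 a2 B1)) // dmixF //; ring.
- ring.
Qed.

Lemma disc_lim g (g0 g1 : R -> R) om :
  disc_partial g (Rtr g0 g1) om @ \oo --> g0 om + g * g1 om.
Proof.
apply: (@cvg_near_cst _ _ (g0 om + g * g1 om) _ \oo); exists 2%N => // n /= n2.
rewrite /disc_partial /series /=.
case: n n2 => [|[|n]] // _.
rewrite big_nat_recl // big_nat_recl // big1 ?addr0 /=; last by move=> i _; rewrite mulr0.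
by rewrite expr0 mul1r expr1.
Qed.

Lemma ret_gen g (s0 : S) f1 g0 g1 (P : probability R R) (e : probability R R) :
  is_trajectory pk rwd pol s0 tt P (Xtr s0 f1) Atr (Rtr g0 g1) ->
  (forall B, measurable B -> e B = P [set om | B (g0 om + g * g1 om)]) ->
  exists (d : measure_display) (Omega : measurableType d)
    (P : probability Omega R) (Xs : nat -> Omega -> S) (As : nat -> Omega -> unit)
    (Rs : nat -> Omega -> R),
    [/\ is_trajectory pk rwd pol s0 tt P Xs As Rs,
        (forall w, cvgn (disc_partial g Rs w)) &
        forall B : set R, measurable B ->
          e B = P [set w | B (limn (disc_partial g Rs w))]].
Proof.
move=> T He; exists _, R, P, (Xtr s0 f1), Atr, (Rtr g0 g1); split => //.
- move=> om; have L := @disc_lim g g0 g1 om; exact: (cvgP _ L).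
- move=> B mB; rewrite He //; congr (P _); apply/funext => om /=.
  by rewrite (cvg_lim _ (@disc_lim g g0 g1 om)).
Qed.

Definition etaf (g : R) (s : S) (u : unit) : probability R R :=
  if s == sx then (pmix w (dmix p (g*a1) (g*a2)) (\d_(g*b) : probability R R) : probability R R)
  else rwd s u.

Lemma rwd_so u A : rwd so u A = \d_(0:R) A. Proof. by []. Qed.
Lemma rwd_sz u A : rwd sz u A = \d_b A. Proof. by []. Qed.
Lemma rwd_sy u A : rwd sy u A = dmix p a1 a2 A. Proof. by []. Qed.
Lemma etaf_so g u A : etaf g so u A = \d_(0:R) A. Proof. by []. Qed.
Lemma etaf_sz g u A : etaf g sz u A = \d_b A. Proof. by []. Qed.
Lemma etaf_sy g u A : etaf g sy u A = dmix p a1 a2 A. Proof. by []. Qed.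
Lemma etaf_sx g u A : etaf g sx u A =
  pmix w (dmix p (g*a1) (g*a2)) (\d_(g*b) : probability R R) A. Proof. by []. Qed.

Lemma ret_ok g : 0 <= w <= 1 -> 0 <= p <= 1 ->
  is_return_dist g pk rwd pol (etaf g).
Proof.
move=> w01 p01 s u; case: u; case: s => [[] []].
- apply: (ret_gen (f1 := fun _ => so) (g0 := fun _ => 0) (g1 := fun _ => 0)
     (P := (\d_(0:R) : probability R R))).
    apply: traj_det; [by [] | exact: measurable_cst |].
    by move=> B0 mB0; rewrite PconstE rwd_so diracE.
  by move=> B mB; rewrite PconstE etaf_so diracE mulr0 addr0.
- apply: (ret_gen (f1 := fun _ => so) (g0 := fun _ => b) (g1 := fun _ => 0)
     (P := (\d_(0:R) : probability R R))).
    apply: traj_det; [by [] | exact: measurable_cst |].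
    by move=> B0 mB0; rewrite PconstE rwd_sz diracE.
  by move=> B mB; rewrite PconstE etaf_sz diracE mulr0 addr0.
- apply: (ret_gen (f1 := fun _ => so) (g0 := id) (g1 := fun _ => 0)
     (P := dmix p a1 a2)).
    apply: traj_det; [by [] | exact: measurable_id | by []].
  move=> B mB; rewrite mulr0.
  by under eq_fun do rewrite addr0.
- apply: (ret_gen (f1 := f1x) (g0 := fun _ => 0) (g1 := g1x) (P := Px)).
    exact: traj_x.
  move=> B mB; rewrite etaf_sx /Px /= pmixE // pmixE // !dmixE // !dpE.
  by rewrite /g1x /= !add0r r10 r20 r21 !eqxx.
Qed.
End mdp.

Section main.
Variable R : realType.
Lemma not_closed m (s : 'I_m -> probability R R -> R) (g w p a1 a2 a1' a2' b : R) :
  0 <= g < 1 -> 0 <= w <= 1 -> 0 <= p <= 1 ->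
  (forall k, s k (dmix p a1 a2) = s k (dmix p a1' a2')) ->
  (exists k, s k (pmix w (dmix p (g*a1) (g*a2)) (\d_(g*b) : probability R R)) !=
             s k (pmix w (dmix p (g*a1') (g*a2')) (\d_(g*b) : probability R R))) ->
  ~ bellman_closed s.
Proof.
move=> g01 w01 p01 hy [k hk] BC.
have [G HG] := BC g g01.
have E1 := HG S unit (pk w) (rwd p a1 a2 b) (pol R) (etaf w p a1 a2 b g)
  (kernel_ok w01) (policy_ok R) (ret_ok a1 a2 b g w01 p01) sx tt _ R (Px w p)
  (Xtr sx (@f1x R)) (@Atr R) (Rtr (fun _ => 0) (g1x a1 a2 b)) (traj_x a1 a2 b w01 p01).
have E2 := HG S unit (pk w) (rwd p a1' a2' b) (pol R) (etaf w p a1' a2' b g)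
  (kernel_ok w01) (policy_ok R) (ret_ok a1' a2' b g w01 p01) sx tt _ R (Px w p)
  (Xtr sx (@f1x R)) (@Atr R) (Rtr (fun _ => 0) (g1x a1' a2' b)) (traj_x a1' a2' b w01 p01).
have JL : joint_law s (etaf w p a1 a2 b g) (Px w p) (Xtr sx (@f1x R)) (@Atr R)
      (Rtr (fun _ => 0) (g1x a1 a2 b)) =
    joint_law s (etaf w p a1' a2' b g) (Px w p) (Xtr sx (@f1x R)) (@Atr R)
      (Rtr (fun _ => 0) (g1x a1' a2' b)).
  rewrite /joint_law; apply/funext => E; case: ifP => // _.
  congr (Px w p _); apply/funext => om /=.
  congr (E (_, _)); apply/funext => k'.
  rewrite /f1x; case: ifP => _; first by [].
  exact: hy.
move: E1 E2; rewrite JL => <- /(congr1 (fun f => f k)) /= e.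
by move/eqP: hk; apply.
Qed.
End main.

Section stats.
Variable R : realType.

Lemma hfun_meas (lo hi : R) : measurable_fun [set: R] (EFin \o hfun lo hi).
Proof.
apply/measurable_EFinP; rewrite /hfun.
apply: measurable_fun_ifT.
- apply: measurable_realfun.measurable_fun_ler => //; exact: measurable_cst.
- exact: measurable_cst.
apply: measurable_fun_ifT.
- apply: measurable_realfun.measurable_fun_ler => //; exact: measurable_cst.
- exact: measurable_cst.
apply: measurable_funM; last exact: measurable_cst.
apply: measurable_funB => //; exact: measurable_cst.
Qed.

Lemma cdrl_ext (lo hi u : R) (mu : probability R R) :
  (forall A, mu A = (\d_u : probability R R) A) -> cdrl_stat lo hi mu = hfun lo hi u.
Proof.
move=> E; rewrite /cdrl_stat.
have -> : (mu : set R -> \bar R) = (\d_u : probability R R).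
  by apply/funext => A; rewrite E.
by rewrite /= integral_dirac ?diracT ?mul1e //; exact: hfun_meas.
Qed.

Lemma indI (u z : R) : ind R ((`]-oo, z]%classic : set R) u) = ((u <= z)%R : bool)%:R.
Proof. by rewrite /ind asboolb in_itv /=. Qed.

Lemma hf1 (lo hi x : R) : x <= lo -> hfun lo hi x = 1.
Proof. by rewrite /hfun => ->. Qed.
Lemma hf0 (lo hi x : R) : lo < hi -> hi <= x -> hfun lo hi x = 0.
Proof.
move=> lh hx; rewrite /hfun hx ifF //; apply/negbTE; rewrite -ltNge.
exact: lt_le_trans lh hx.
Qed.
Lemma hpos (lo hi x : R) : lo < hi -> x < hi -> 0 < hfun lo hi x.
Proof.
move=> lh xh; rewrite /hfun; case: ifP => // _.
rewrite ifF; last by apply/negbTE; rewrite -ltNge.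
by apply: divr_gt0; rewrite subr_gt0.
Qed.
Lemma hlt1 (lo hi x : R) : lo < hi -> lo < x -> hfun lo hi x < 1.
Proof.
move=> lh lx; rewrite /hfun ifF; last by apply/negbTE; rewrite -ltNge.
case: ifP => // /negbT; rewrite -ltNge => xh.
rewrite ltr_pdivrMr ?subr_gt0 // mul1r; lra.
Qed.

Lemma cdrl_dmix1 (lo hi u v : R) : cdrl_stat lo hi (dmix 1 u v) = hfun lo hi u.
Proof.
apply: cdrl_ext => A; rewrite dmixE ?dpE ?ler01 ?lexx //.
by rewrite subrr mul0r addr0 mul1r.
Qed.

Lemma cdrl_pmix1 (lo hi u v : R) (m : probability R R) :
  cdrl_stat lo hi (pmix 1 (dmix 1 u v) m) = hfun lo hi u.
Proof.
apply: cdrl_ext => A; rewrite /= pmixE ?ler01 ?lexx // dmixE ?ler01 ?lexx // dpE.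
by rewrite subrr mul0e adde0 mul1e mul0r addr0 mul1r.
Qed.

Lemma part1 (K : nat) (z1 delta : R) : (2 <= K)%N -> 0 < delta ->
  ~ bellman_closed (fun k : 'I_K.-1 =>
          cdrl_stat (z1 + k%:R * delta) (z1 + (k.+1)%:R * delta)).
Proof.
case: K => [|[|n]] // _ dp.
have lh : forall k : nat, z1 + k%:R * delta < z1 + (k.+1)%:R * delta.
  by move=> k; rewrite ltrD2l ltr_pM2r // ltr_nat.
have g01 : (0 <= (1/2 : R) < 1) by apply/andP; split; lra.
have o01 : (0 <= (1 : R) <= 1) by rewrite ler01 lexx.
set Z := z1 + (n.+1)%:R * delta.
have [Zp|Zn] := ltrP 0 Z.
  apply: (@not_closed _ _ _ (1/2) 1 1 Z 0 (2*Z+2) 0 0) => //.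
    move=> k; rewrite !cdrl_dmix1.
    have hZ : z1 + (k.+1)%:R * delta <= Z.
      by rewrite lerD2l ler_pM2r // ler_nat.
    rewrite !hf0 //; lra.
  exists ord_max; rewrite !cdrl_pmix1 /=.
  rewrite (@hf0 _ _ (1/2 * (2 * Z + 2))); last by rewrite -/Z; lra.
    by rewrite gt_eqF // hpos // -/Z; lra.
  exact: lh.
have z1n : z1 < 0.
  have : 0 < (n.+1)%:R * delta by rewrite mulr_gt0.
  move: Zn; rewrite /Z => Zn; lra.
apply: (@not_closed _ _ _ (1/2) 1 1 z1 0 (2*z1-2) 0 0) => //.
  move=> k; rewrite !cdrl_dmix1.
  have hk : z1 <= z1 + k%:R * delta by rewrite lerDl mulr_ge0 // ltW.
  by rewrite !hf1 //; lra.
exists ord0; rewrite !cdrl_pmix1 /=.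
rewrite (@hf1 _ _ (1/2 * (2 * z1 - 2))); last by rewrite mul0r addr0; lra.
rewrite lt_eqF // hlt1 //; last by rewrite mul0r addr0; lra.
Qed.

Lemma Pfin (mu : probability R R) (A : set R) : measurable A -> mu A \is a fin_num.
Proof.
move=> mA; rewrite ge0_fin_numE ?measure_ge0 //.
apply: (le_lt_trans (probability_le1 mu mA)); exact: ltry.
Qed.

Lemma cdf_mono (mu : probability R R) (z z' : R) : z <= z' -> Defs.cdf mu z <= Defs.cdf mu z'.
Proof.
move=> zz; rewrite /Defs.cdf; apply: fine_le; rewrite ?inE; try exact: Pfin.
apply: le_measure; rewrite ?inE //.
by move=> x /=; rewrite !in_itv /= => /le_trans; apply.
Qed.

Lemma quant_eq (tau v : R) (mu : probability R R) :
  (forall z, z < v -> Defs.cdf mu z < tau) -> tau <= Defs.cdf mu v -> quantile_stat tau mu = v.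
Proof.
move=> H1 H2; rewrite /quantile_stat.
rewrite (_ : [set z | tau <= Defs.cdf mu z] = [set` `[v, +oo[%R]) ?inf_itv //.
apply/seteqP; split => z /=.
- move=> h; rewrite in_itv /= andbT leNgt; apply/negP => zv.
  by have := H1 z zv; rewrite ltNge h.
- rewrite in_itv /= andbT => vz; exact: le_trans H2 (cdf_mono mu vz).
Qed.

Lemma cdf_dmix (q u v z : R) : 0 <= q <= 1 ->
  Defs.cdf (dmix q u v) z = q * ((u <= z)%R : bool)%:R + (1 - q) * ((v <= z)%R : bool)%:R.
Proof. by move=> q01; rewrite /Defs.cdf dmixF // !indI. Qed.

Lemma cdf_mix3 (w q u v c z : R) : 0 <= w <= 1 -> 0 <= q <= 1 ->
  Defs.cdf (pmix w (dmix q u v) (\d_c : probability R R)) z =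
  w * (q * ((u <= z)%R : bool)%:R + (1 - q) * ((v <= z)%R : bool)%:R)
  + (1 - w) * ((c <= z)%R : bool)%:R.
Proof.
move=> w01 q01; rewrite /Defs.cdf /= pmixE // dmixE // dpE -!EFinM -EFinD /=.
by rewrite !indI.
Qed.

Lemma quant_dmix (tau q a : R) : 0 <= q <= 1 -> 0 < a -> 0 < tau -> tau <= q ->
  quantile_stat tau (dmix q 0 a) = 0.
Proof.
move=> q01 a0 t0 tq; apply: quant_eq.
  move=> z z0; rewrite cdf_dmix //.
  rewrite (_ : (0 <= z) = false); last by apply/negbTE; rewrite -ltNge.
  rewrite (_ : (a <= z) = false); last by apply/negbTE; rewrite -ltNge; apply: lt_trans a0.
  by rewrite /= !mulr0n !mulr0 addr0.
rewrite cdf_dmix // lexx (_ : (a <= 0) = false); last by apply/negbTE; rewrite -ltNge.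
by rewrite /= mulr1n mulr0n mulr1 mulr0 addr0.
Qed.

Lemma quant_mix (w q u c d : R) : 0 <= w <= 1 -> 0 <= q <= 1 -> 0 < w -> q < 1 ->
  u < c -> c < d -> quantile_stat w (pmix w (dmix q u c) (\d_d : probability R R)) = c.
Proof.
move=> w01 q01 w0 q1 uc cd; apply: quant_eq.
  move=> z zc; rewrite cdf_mix3 //.
  rewrite (_ : (c <= z) = false); last by apply/negbTE; rewrite -ltNge.
  rewrite (_ : (d <= z) = false); last first.
    by apply/negbTE; rewrite -ltNge; apply: lt_trans cd.
  case: (u <= z) => /=; rewrite ?mulr1n ?mulr0n; nra.
rewrite cdf_mix3 // lexx (ltW uc) (_ : (d <= c) = false) /=; last by apply/negbTE; rewrite -ltNge.
by rewrite !mulr1n mulr0n !mulr1 mulr0 addr0 subrKC mulr1.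
Qed.

Lemma part2 (K : nat) : (1 <= K)%N ->
  ~ @bellman_closed R _ (fun k : 'I_K =>
          quantile_stat ((2 * k + 1)%N%:R / (2 * K)%N%:R)).
Proof.
case: K => [|n] // _.
have NE : (2 * n.+1)%N%:R = 1 + (2 * n + 1)%N%:R :> R.
  by rewrite -mulrS; congr (_ %:R); rewrite mulnS; lia.
set M : R := (2 * n + 1)%N%:R.
have M1 : 1 <= M by rewrite /M ler1n addn1.
set q : R := (1 + M)^-1.
have qE : q * (1 + M) = 1 by rewrite /q mulVf //; apply/lt0r_neq0; lra.
have q0 : 0 < q by rewrite /q invr_gt0; lra.
have q12 : q <= 1/2 by nra.
have p01 : 0 <= 1 - q <= 1 by apply/andP; split; lra.
have g01 : (0 <= (1/2 : R) < 1) by apply/andP; split; lra.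
apply: (@not_closed _ _ _ (1/2) (1-q) (1-q) 0 1 0 2 3) => //.
  move=> k; rewrite NE !quant_dmix //; try lra.
  - rewrite -/M ler_pdivrMr; last lra.
    rewrite mulrBl mul1r qE.
    have : ((2 * k + 1)%N%:R : R) <= M by rewrite /M ler_nat; have := ltn_ord k; lia.
    lra.
  - rewrite -/M ler_pdivrMr; last lra.
    rewrite mulrBl mul1r qE.
    have : ((2 * k + 1)%N%:R : R) <= M by rewrite /M ler_nat; have := ltn_ord k; lia.
    lra.
exists ord_max; rewrite /= NE -/M.
have -> : M / (1 + M) = 1 - q.
  rewrite /q; field; lra.
rewrite !quant_mix //; try lra.
Qed.
End stats.

Theorem lemma3 (R : realType) :
  (forall (K : nat) (z1 delta : R), (2 <= K)%N -> 0 < delta ->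
     ~ @bellman_closed R _ (fun k : 'I_K.-1 =>
          cdrl_stat (z1 + k%:R * delta) (z1 + (k.+1)%:R * delta))) /\
  (forall K : nat, (1 <= K)%N ->
     ~ @bellman_closed R _ (fun k : 'I_K =>
          quantile_stat ((2 * k + 1)%N%:R / (2 * K)%N%:R))).
Proof.
split.
- move=> K z1 delta; exact: part1.
- exact: part2.
Qed.
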